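(* The class of finite tournaments has the Rank Property: for every countable ordinal $\alpha$ there is a countable tournament $X$ with $\mathsf{rk}(X)=\alpha$.
   Context: A tournament is a structure $(T,\to)$ with a binary relation $\to$ such that for any two distinct $u,v$ exactly one of $u\to v$, $v\to u$ holds (and no loops). Let $\mathcal F$ be the class of finite tournaments; countable tournaments are the structures considered. Substructures are induced sub-tournaments, $\mathsf{age}(X)$ is the set of finite sub-tournaments of $X$. For $A\le B$, $B$ is a prime extension of $A$ if $|B\setminus A|=1$; a realization of $B$ in $X$ (where $A\le X$) is $C\le X$ with $A\le C$ and an isomorphism $B\to C$ fixing $A$ pointwise. For $F\in\mathsf{age}(X)$ define by recursion: $\mathsf{rk}_X(F)\ge0$ always; $\mathsf{rk}_X(F)\ge\alpha+1$ iff every prime extension $B\in\mathcal F$ of $F$ has a realization $C$ in $X$ with $\mathsf{rk}_X(C)\ge\alpha$; for limit $\alpha$, $\mathsf{rk}_X(F)\ge\alpha$ iff $\mathsf{rk}_X(F)\ge\beta$ for all $\beta<\alpha$. $\mathsf{rk}_X(F)=\sup\{\alpha:\mathsf{rk}_X(F)\ge\alpha\}$ (or $\infty$ if this holds for all ordinals), and $\mathsf{rk}(X)=\mathsf{rk}_X(\emptyset)$. *)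

(* Defs.v *)
From Stdlib Require Import List.
Import ListNotations.

Record tournament : Type := Tournament {
  tv : Type;
  tarr : tv -> tv -> Prop;
  tarr_asym : forall u v, tarr u v -> ~ tarr v u;
  tarr_total : forall u v, u <> v -> tarr u v \/ tarr v u
}.

Definition finite_tournament (B : tournament) : Prop :=
  exists l : list (tv B), forall b, In b l.

Definition countable_tournament (X : tournament) : Prop :=
  exists f : tv X -> nat, forall x y, f x = f y -> x = y.

(** A finite substructure F of X (an element of age(X)) is represented by a
    list of vertices of X: F is the induced sub-tournament on {x | In x F}. *)

Definition is_prime_ext (X : tournament) (F : list (tv X))
    (B : tournament) (e : tv X -> tv B) : Prop :=
  finite_tournament B /\
  (forall x y, In x F -> In y F -> e x = e y -> x = y) /\
  (forall x y, In x F -> In y F -> (tarr X x y <-> tarr B (e x) (e y))) /\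
  exists b0, (forall x, In x F -> e x <> b0) /\
             (forall b, b <> b0 -> exists x, In x F /\ e x = b).

Definition realized_with (X : tournament) (F : list (tv X))
    (B : tournament) (e : tv X -> tv B) (P : list (tv X) -> Prop) : Prop :=
  exists g : tv B -> tv X,
    (forall b b', g b = g b' -> b = b') /\
    (forall b b', tarr B b b' <-> tarr X (g b) (g b')) /\
    (forall x, In x F -> g (e x) = x) /\
    exists C : list (tv X), (forall y, In y C <-> exists b, g b = y) /\ P C.

(** Ordinals are presented as (elements of) well-ordered types: the element
    w of W stands for the order type of {v | v < w}. *)
Record wellorder : Type := WellOrder {
  wo : Type;
  wlt : wo -> wo -> Prop;
  wlt_irrefl : forall x, ~ wlt x x;
  wlt_trans : forall x y z, wlt x y -> wlt y z -> wlt x z;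
  wlt_total : forall x y, wlt x y \/ x = y \/ wlt y x;
  wlt_wf : well_founded wlt
}.

Definition countable_wellorder (W : wellorder) : Prop :=
  exists f : wo W -> nat, forall x y, f x = f y -> x = y.

(** The recursion defining rk_X(F) >= w:
    - w = 0 (no predecessor): always;
    - w = v + 1 (v immediate predecessor): every prime extension B of F has
      a realization C in X with rk_X(C) >= v;
    - w limit: rk_X(F) >= v for every v < w. *)
Definition rkge_body (X : tournament) (W : wellorder) (w : wo W)
    (rec : forall v : wo W, wlt W v w -> list (tv X) -> Prop)
    (F : list (tv X)) : Prop :=
  (forall v, ~ wlt W v w) \/
  (exists v (h : wlt W v w),
      (forall u, wlt W u w -> u = v \/ wlt W u v) /\
      forall (B : tournament) (e : tv X -> tv B),
        is_prime_ext X F B e -> realized_with X F B e (rec v h)) \/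
  ((exists v, wlt W v w) /\
   (forall v, wlt W v w -> exists u, wlt W v u /\ wlt W u w) /\
   (forall v (h : wlt W v w), rec v h F)).

(** rkge X W w F  :=  rk_X(F) >= (the ordinal represented by w). *)
Definition rkge (X : tournament) (W : wellorder) : wo W -> list (tv X) -> Prop :=
  Fix (wlt_wf W) (fun _ => list (tv X) -> Prop) (rkge_body X W).

(** rk(X) = rk_X(emptyset) equals the ordinal represented by a, measured in a
    scale W that extends beyond a: rk(X) >= a and rk(X) >= b fails for every
    b > a (so the sup is exactly a, and not infinity). *)
Definition rank_is (X : tournament) (W : wellorder) (a : wo W) : Prop :=
  rkge X W a [] /\ forall b, wlt W a b -> ~ rkge X W b [].

(* Main.v *)
Require Import Defs.
From Stdlib Require Import List Arith Lia ZArith Classical ClassicalEpsilon ProofIrrelevance FunctionalExtensionality Cantor.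
Import ListNotations.

Lemma rkge_unfold (X : tournament) (W : wellorder) (w : wo W) (F : list (tv X)) :
  rkge X W w F <-> rkge_body X W w (fun v _ => rkge X W v) F.
Proof.
  unfold rkge at 1. rewrite Fix_eq. { split; auto. }
  intros x f g H.
  assert (E : f = g).
  { apply functional_extensionality_dep; intro y.
    apply functional_extensionality_dep; intro p. apply H. }
  rewrite E; reflexivity.
Qed.

Section Generic.
Variable X : tournament.
Variable W : wellorder.

Definition wle (u w : wo W) := wlt W u w \/ u = w.
Definition pred_of (v w : wo W) := wlt W v w /\ forall u, wlt W u w -> u = v \/ wlt W u v.
Definition realizes (F : list (tv X)) (t : tv X -> Prop) (x : tv X) :=
  ~ In x F /\ forall y, In y F -> (tarr X x y <-> t y).
Definition seteq (F G : list (tv X)) := forall y, In y F <-> In y G.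

Lemma tarr_irrefl : forall x, ~ tarr X x x.
Proof. intros x H. exact (tarr_asym X x x H H). Qed.

Lemma tarr_neg : forall x y, x <> y -> (~ tarr X x y <-> tarr X y x).
Proof.
  intros x y Hne; split; intro H.
  - destruct (tarr_total X x y Hne); tauto.
  - intro H'. exact (tarr_asym X _ _ H H').
Qed.

Fixpoint sig_list (F : list (tv X)) : list {y : tv X | In y F} :=
  match F as F0 return list {y : tv X | In y F0} with
  | [] => []
  | y :: F' => exist (fun z => In z (y :: F')) y (or_introl eq_refl)
       :: map (fun s : {z : tv X | In z F'} =>
                 exist (fun z => In z (y :: F')) (proj1_sig s) (or_intror (proj2_sig s)))
              (sig_list F')
  end.

Lemma sig_list_full : forall F (s : {y : tv X | In y F}), In s (sig_list F).
Proof.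
  induction F as [|y F IH]; intros [z h]; simpl in *.
  - destruct h.
  - destruct h as [h|h].
    + left. subst z. f_equal; try apply proof_irrelevance.
    + right. apply in_map_iff. exists (exist _ z h). split; auto.
Qed.

Section Ext.
Variable F : list (tv X).
Variable t : tv X -> Prop.

Definition ext_v := option {y : tv X | In y F}.
Definition ext_arr (b b' : ext_v) : Prop :=
  match b, b' with
  | None, None => False
  | None, Some y => t (proj1_sig y)
  | Some y, None => ~ t (proj1_sig y)
  | Some y, Some y' => tarr X (proj1_sig y) (proj1_sig y')
  end.

Lemma ext_asym : forall u v, ext_arr u v -> ~ ext_arr v u.
Proof.
  intros [u|] [v|]; simpl; auto.
  apply tarr_asym.
Qed.

Lemma ext_total : forall u v, u <> v -> ext_arr u v \/ ext_arr v u.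
Proof.
  intros [u|] [v|] Hne; simpl.
  - apply tarr_total. intro E. apply Hne. destruct u as [u hu], v as [v hv]; simpl in E; subst v.
    rewrite (proof_irrelevance _ hu hv). reflexivity.
  - destruct (classic (t (proj1_sig u))); tauto.
  - destruct (classic (t (proj1_sig v))); tauto.
  - exfalso; apply Hne; reflexivity.
Qed.

Definition ext_tour : tournament := Tournament ext_v ext_arr ext_asym ext_total.

Definition ext_e (y : tv X) : tv ext_tour :=
  match excluded_middle_informative (In y F) with
  | left h => Some (exist _ y h)
  | right _ => None
  end.

Lemma ext_e_in : forall y (h : In y F), ext_e y = Some (exist _ y h).
Proof.
  intros y h; unfold ext_e.
  destruct (excluded_middle_informative (In y F)) as [h'|h']; [|contradiction].
  f_equal; f_equal; apply proof_irrelevance.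
Qed.

Lemma ext_prime : is_prime_ext X F ext_tour ext_e.
Proof.
  split; [|split; [|split]].
  - exists (None :: map Some (sig_list F)). intros [b|]; simpl; auto.
    right. apply in_map. apply sig_list_full.
  - intros x y hx hy E. rewrite (ext_e_in x hx), (ext_e_in y hy) in E.
    injection E; auto.
  - intros x y hx hy. rewrite (ext_e_in x hx), (ext_e_in y hy). simpl. tauto.
  - exists None. split.
    + intros x hx. rewrite (ext_e_in x hx). discriminate.
    + intros [b|] Hb; [|contradiction].
      exists (proj1_sig b). split; [apply proj2_sig|].
      destruct b as [y h]. apply ext_e_in.
Qed.
End Ext.

Lemma wlt_asym : forall u v, wlt W u v -> ~ wlt W v u.
Proof. intros u v H H'. apply (wlt_irrefl W u). exact (wlt_trans W _ _ _ H H'). Qed.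

Section Upper.
Variable Up : wo W -> list (tv X) -> Prop.
Hypothesis H_inv : forall w F G, seteq F G -> Up w F -> Up w G.
Hypothesis H_min : forall w F, (forall v, ~ wlt W v w) -> Up w F.
Hypothesis H_lim : forall w F, (exists v, wlt W v w) ->
  (forall v, wlt W v w -> exists u, wlt W v u /\ wlt W u w) ->
  (forall v, wlt W v w -> Up v F) -> Up w F.
Hypothesis H_step : forall F, exists t : tv X -> Prop,
  forall w v x, pred_of v w -> realizes F t x -> Up v (x :: F) -> Up w F.

Lemma upper_bound : forall w F, rkge X W w F -> Up w F.
Proof.
  intro w. induction w as [w IH] using (well_founded_ind (wlt_wf W)).
  intros F H. apply rkge_unfold in H.
  destruct H as [H|[H|H]].
  - apply H_min; exact H.
  - destruct H as [v [h [Hpred H]]].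
    destruct (H_step F) as [t Ht].
    destruct (H (ext_tour F t) (ext_e F t) (ext_prime F t)) as [g [ginj [giso [gfix [C [HC HP]]]]]].
    set (x := g None).
    assert (Hreal : realizes F t x).
    { split.
      - intro hx. assert (E : g (ext_e F t x) = g None) by (rewrite gfix; auto).
        apply ginj in E. rewrite (ext_e_in F t x hx) in E. discriminate.
      - intros y hy. pose proof (giso None (ext_e F t y)) as G.
        rewrite (gfix y hy) in G. fold x in G. rewrite <- G.
        rewrite (ext_e_in F t y hy). simpl. tauto. }
    apply (Ht w v x); [split; auto|exact Hreal|].
    apply H_inv with C.
    + intro y. rewrite HC. split.
      * intros [b Hb]. destruct b as [b|].
        -- right. subst y. destruct b as [z hz]. simpl.
           rewrite <- (ext_e_in F t z hz). rewrite gfix; auto.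
        -- left. auto.
      * intros [E|hy].
        -- exists None. auto.
        -- exists (ext_e F t y). apply gfix; auto.
    + apply IH; auto.
  - destruct H as [Hex [Hl H]]. apply H_lim; auto.
Qed.
End Upper.

Section Lower.
Variable Lo : wo W -> list (tv X) -> Prop.
Hypothesis L_down : forall w v F, wlt W v w -> Lo w F -> Lo v F.
Hypothesis L_step : forall w v F, pred_of v w -> Lo w F ->
  forall t : tv X -> Prop, exists x, realizes F t x /\ Lo v (x :: F).

Lemma wtrichotomy : forall w,
  (forall v, ~ wlt W v w) \/ (exists v, pred_of v w) \/
  ((exists v, wlt W v w) /\ forall v, wlt W v w -> exists u, wlt W v u /\ wlt W u w).
Proof.
  intro w.
  destruct (classic (exists v, wlt W v w)) as [[v0 Hv0]|Hn].
  - destruct (classic (exists v, pred_of v w)) as [Hp|Hnp]; [tauto|].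
    right; right. split; [eauto|].
    intros v Hv. apply NNPP. intro Hno. apply Hnp. exists v. split; auto.
    intros u Hu. destruct (wlt_total W u v) as [H1|[H1|H1]]; auto.
    exfalso; apply Hno; eauto.
  - left. intros v Hv; apply Hn; eauto.
Qed.

Lemma lower_bound : forall w F, Lo w F -> rkge X W w F.
Proof.
  intro w. induction w as [w IH] using (well_founded_ind (wlt_wf W)).
  intros F HL. apply rkge_unfold.
  destruct (wtrichotomy w) as [H|[[v Hp]|[Hex Hl]]].
  - left; exact H.
  - right; left. exists v, (proj1 Hp). split; [apply Hp|].
    intros B e [Bfin [einj [earr [b0 [Hb0 Hb]]]]].
    set (t := fun y => tarr B b0 (e y)).
    destruct (L_step w v F Hp HL t) as [x [[xF xt] Lx]].
    assert (choose : forall b, b <> b0 -> {y | In y F /\ e y = b}).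
    { intros b hb. apply constructive_indefinite_description. apply Hb; auto. }
    set (g := fun b => match excluded_middle_informative (b = b0) with
                       | left _ => x
                       | right hb => proj1_sig (choose b hb) end).
    assert (g0 : g b0 = x).
    { unfold g. destruct (excluded_middle_informative (b0 = b0)); [auto|contradiction]. }
    assert (g1 : forall b (hb : b <> b0), In (g b) F /\ e (g b) = b).
    { intros b hb. unfold g. destruct (excluded_middle_informative (b = b0)); [contradiction|].
      apply proj2_sig. }
    assert (gfix : forall y, In y F -> g (e y) = y).
    { intros y hy. assert (hne : e y <> b0) by (apply Hb0; auto).
      destruct (g1 (e y) hne) as [h1 h2]. apply einj; auto. }
    exists g. split; [|split; [|split]].
    + intros b b' E.
      destruct (classic (b = b0)) as [E1|E1]; destruct (classic (b' = b0)) as [E2|E2].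
      * congruence.
      * subst b. rewrite g0 in E. exfalso. apply xF. rewrite E. apply g1; auto.
      * subst b'. rewrite g0 in E. exfalso. apply xF. rewrite <- E. apply g1; auto.
      * destruct (g1 b E1) as [_ h1]. destruct (g1 b' E2) as [_ h2]. congruence.
    + intros b b'.
      destruct (classic (b = b0)) as [E1|E1]; destruct (classic (b' = b0)) as [E2|E2].
      * rewrite E1, E2, g0. split; intro H; exfalso;
        [exact (tarr_asym B _ _ H H) | exact (tarr_asym X _ _ H H)].
      * subst b. rewrite g0. destruct (g1 b' E2) as [h1 h2].
        rewrite <- h2 at 1. rewrite (xt _ h1). unfold t. reflexivity.
      * subst b'. rewrite g0. destruct (g1 b E1) as [h1 h2].
        assert (ne1 : b <> b0) by auto.
        assert (nx : g b <> x) by (intro E; apply xF; rewrite <- E; auto).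
        split; intro H.
        -- apply tarr_neg; auto. rewrite (xt _ h1). unfold t. rewrite h2.
           intro H'. exact (tarr_asym B _ _ H H').
        -- apply (tarr_neg x (g b)) in H; [|auto]. rewrite (xt _ h1) in H. unfold t in H.
           rewrite h2 in H. destruct (tarr_total B b b0 ne1); tauto.
      * destruct (g1 b E1) as [h1 h2]. destruct (g1 b' E2) as [h1' h2'].
        rewrite <- h2 at 1. rewrite <- h2' at 1. symmetry. apply earr; auto.
    + exact gfix.
    + exists (x :: F). split.
      * intro y. split.
        -- intros [E|hy]. exists b0; congruence. exists (e y). apply gfix; auto.
        -- intros [b E]. destruct (classic (b = b0)) as [E1|E1].
           left. rewrite <- E, E1, g0. auto.
           right. rewrite <- E. apply g1; auto.
      * apply IH; [apply Hp|exact Lx].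
  - right; right. split; [exact Hex|split; [exact Hl|]].
    intros v h. apply IH; auto. apply L_down with w; auto.
Qed.
End Lower.
End Generic.

Section Ord.
Variable W : wellorder.
Notation wlt := (wlt W).
Notation wle := (wle W).

Fixpoint ladd (b : option (wo W)) (k : nat) (w : wo W) : Prop :=
  match k with
  | 0 => match b with Some c => wle w c | None => False end
  | S k => forall u, wlt u w -> ladd b k u
  end.

Definition two_le (v : wo W) := exists u1 u2, wlt u1 u2 /\ wlt u2 v.

Lemma wle_trans_lt : forall x y z, wlt x y -> wle y z -> wlt x z.
Proof. intros x y z H [H'|H']; [eapply wlt_trans; eauto|subst; auto]. Qed.

Lemma ladd_down : forall b k w x, ladd b k w -> wlt x w -> ladd b k x.
Proof.
  intros b k; destruct k as [|k]; simpl; intros w x H Hx.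
  - destruct b as [c|]; auto. left. eapply wle_trans_lt; eauto.
  - intros u Hu. apply H. eapply wlt_trans; eauto.
Qed.

Lemma ladd_lim : forall b k w, (exists v, wlt v w) ->
  (forall v, wlt v w -> exists u, wlt v u /\ wlt u w) ->
  (forall v, wlt v w -> ladd b k v) -> ladd b k w.
Proof.
  intros b k w [v0 Hv0] Hl H. destruct k as [|k]; simpl.
  - destruct b as [c|].
    + destruct (wlt_total W w c) as [E|[E|E]]; [left; auto|right; auto|].
      destruct (Hl c E) as [u [Hu1 Hu2]]. specialize (H u Hu2). simpl in H.
      exfalso. destruct H as [H|H]. apply (wlt_asym W _ _ H Hu1). subst; apply (wlt_irrefl W _ Hu1).
    + specialize (H v0 Hv0). exact H.
  - intros x Hx. destruct (Hl x Hx) as [u [Hu1 Hu2]]. specialize (H u Hu2). simpl in H. auto.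
Qed.

Lemma ladd_min_S : forall b k w, (forall v, ~ wlt v w) -> ladd b (S k) w.
Proof. intros b k w H u Hu. exfalso; eapply H; eauto. Qed.

Lemma ladd_min_Some : forall c k w, (forall v, ~ wlt v w) -> ladd (Some c) k w.
Proof.
  intros c [|k] w H; [|apply ladd_min_S; auto].
  simpl. destruct (wlt_total W w c) as [E|[E|E]]; [left|right|]; auto.
  exfalso; eapply H; eauto.
Qed.

Lemma ladd_succ : forall b k v w, ladd b k v -> pred_of W v w -> ladd b (S k) w.
Proof.
  intros b k v w H [Hvw Hp] u Hu. destruct (Hp u Hu) as [E|E].
  - subst; auto.
  - eapply ladd_down; eauto.
Qed.

Lemma ladd_monoS : forall b k w, ladd b k w -> ladd b (S k) w.
Proof. intros b k w H u Hu. eapply ladd_down; eauto. Qed.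

Lemma ladd_mono : forall b k k' w, k <= k' -> ladd b k w -> ladd b k' w.
Proof.
  intros b k k' w Hk. induction Hk; auto. intro H. apply ladd_monoS; auto.
Qed.

Lemma ladd_base : forall c c' k w, wle c c' -> ladd (Some c) k w -> ladd (Some c') k w.
Proof.
  intros c c' k. induction k as [|k IH]; simpl; intros w Hc H.
  - destruct H as [H|H]; [left; eapply wle_trans_lt; eauto|subst; auto].
  - intros u Hu. apply IH; auto.
Qed.

Lemma ladd_C : forall u c k w, wlt u c -> ladd (Some u) (S k) w -> ladd (Some c) k w.
Proof.
  intros u c k. induction k as [|k IH]; intros w Huc H.
  - simpl in *. destruct (wlt_total W w c) as [E|[E|E]]; [left|right|]; auto.
    specialize (H c E). exfalso. destruct H as [H|H].
    + apply (wlt_asym W _ _ H Huc).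
    + subst; apply (wlt_irrefl W _ Huc).
  - simpl. intros x Hx. apply IH; auto.
Qed.

Lemma ladd_B : forall u c k v w, wlt u c -> ladd (Some u) k v -> pred_of W v w ->
  ladd (Some c) k w.
Proof.
  intros u c k v w Huc H Hp.
  apply ladd_C with u; auto. eapply ladd_succ; eauto.
Qed.

Lemma ladd_D : forall u k w, ladd None (S k) w -> ladd (Some u) k w.
Proof.
  intros u k. induction k as [|k IH]; intros w H.
  - simpl. destruct (wlt_total W w u) as [E|[E|E]]; [left|right|]; auto.
    exfalso. exact (H u E).
  - simpl. intros x Hx. apply IH. exact (H x Hx).
Qed.

Lemma ladd_A : forall c k v w, two_le c -> ladd None (S (S k)) v -> pred_of W v w ->
  ladd (Some c) k w.
Proof.
  intros c k v w [u1 [u2 [H12 H2c]]] H Hp.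
  apply ladd_D with (u := u1) in H.
  apply ladd_C with (c := u2) in H; auto.
  eapply ladd_B; eauto.
Qed.

Lemma not_two_le_ladd : forall v, ~ two_le v -> ladd None 2 v.
Proof.
  intros v Hn x Hx y Hy. apply Hn. exists y, x. auto.
Qed.

End Ord.

Section Tree.
Variable W : wellorder.
Notation wlt := (wlt W).

Definition E : Type := (Z * option (wo W) * list bool)%type.

Fixpoint ltB (l1 l2 : list bool) : Prop :=
  match l1, l2 with
  | [], [] => False
  | [], _ :: _ => True
  | _ :: _, [] => False
  | b1 :: l1', b2 :: l2' => (b1 = false /\ b2 = true) \/ (b1 = b2 /\ ltB l1' l2')
  end.

Definition ltL (o1 o2 : option (wo W)) : Prop :=
  match o1, o2 with
  | None, None => False
  | None, Some _ => True
  | Some _, None => False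
  | Some v1, Some v2 => wlt v1 v2
  end.

Definition ltE (e1 e2 : E) : Prop :=
  match e1, e2 with
  | (z1, o1, l1), (z2, o2, l2) =>
    (z1 < z2)%Z \/ (z1 = z2 /\ ltL o1 o2) \/ (z1 = z2 /\ o1 = o2 /\ ltB l1 l2)
  end.

Lemma ltB_irrefl : forall l, ~ ltB l l.
Proof. induction l as [|b l IH]; simpl; [tauto|]. intros [[H1 H2]|[_ H]]; [congruence|auto]. Qed.

Lemma ltB_trans : forall l1 l2 l3, ltB l1 l2 -> ltB l2 l3 -> ltB l1 l3.
Proof.
  induction l1 as [|b1 l1 IH]; intros [|b2 l2] [|b3 l3]; simpl; try tauto.
  intros [[H1 H2]|[H1 H2]] [[H3 H4]|[H3 H4]]; subst; try congruence; eauto.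
Qed.

Lemma ltB_total : forall l1 l2, l1 <> l2 -> ltB l1 l2 \/ ltB l2 l1.
Proof.
  induction l1 as [|b1 l1 IH]; intros [|b2 l2] H; simpl; auto.
  destruct (Bool.bool_dec b1 b2) as [E|E].
  - subst. assert (l1 <> l2) by congruence. destruct (IH l2); auto.
  - destruct b1, b2; tauto.
Qed.

Lemma ltL_irrefl : forall o, ~ ltL o o.
Proof. intros [v|]; simpl; auto. apply wlt_irrefl. Qed.

Lemma ltL_trans : forall o1 o2 o3, ltL o1 o2 -> ltL o2 o3 -> ltL o1 o3.
Proof. intros [v1|] [v2|] [v3|]; simpl; try tauto. apply wlt_trans. Qed.

Lemma ltL_total : forall o1 o2, o1 <> o2 -> ltL o1 o2 \/ ltL o2 o1.
Proof.
  intros [v1|] [v2|] H; simpl; auto.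
  destruct (wlt_total W v1 v2) as [E|[E|E]]; auto. subst; tauto.
Qed.

Lemma ltE_irrefl : forall e, ~ ltE e e.
Proof.
  intros [[z o] l]; simpl. intros [H|[[_ H]|[_ [_ H]]]].
  - lia.
  - exact (ltL_irrefl _ H).
  - exact (ltB_irrefl _ H).
Qed.

Lemma ltE_trans : forall e1 e2 e3, ltE e1 e2 -> ltE e2 e3 -> ltE e1 e3.
Proof.
  intros [[z1 o1] l1] [[z2 o2] l2] [[z3 o3] l3]; simpl.
  intros [H|[[H1 H]|[H1 [H2 H]]]] [H'|[[H1' H']|[H1' [H2' H']]]]; subst;
    try (left; lia).
  - right; left; split; auto. eapply ltL_trans; eauto.
  - right; left; auto.
  - right; left; auto.
  - right; right; split; auto; split; auto. eapply ltB_trans; eauto.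
Qed.

Lemma ltE_total : forall e1 e2, e1 <> e2 -> ltE e1 e2 \/ ltE e2 e1.
Proof.
  intros [[z1 o1] l1] [[z2 o2] l2] H; simpl.
  destruct (Z.lt_trichotomy z1 z2) as [Hz|[Hz|Hz]]; [left; left; auto| |right; left; auto].
  subst z2. destruct (classic (o1 = o2)) as [Ho|Ho].
  - subst o2. assert (l1 <> l2) by congruence.
    destruct (ltB_total l1 l2); auto; [left|right]; right; right; auto.
  - destruct (ltL_total o1 o2 Ho); [left|right]; right; left; auto.
Qed.

Lemma ltE_asym : forall e1 e2, ltE e1 e2 -> ~ ltE e2 e1.
Proof. intros e1 e2 H H'. apply (ltE_irrefl e1). eapply ltE_trans; eauto. Qed.

Definition e0 : E := (0%Z, None, []).
Definition dbeats (r : list E) : Prop := nth (length r - 1) (snd (last r e0)) false = true.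

Fixpoint arr (s t : list E) : Prop :=
  match s with
  | [] => match t with [] => False | _ :: _ => ~ dbeats t end
  | e1 :: s' => match t with
                | [] => dbeats s
                | e2 :: t' => (e1 = e2 /\ arr s' t') \/ (e1 <> e2 /\ ltE e1 e2)
                end
  end.

Lemma arr_asym : forall s t, arr s t -> ~ arr t s.
Proof.
  induction s as [|e1 s IH]; intros [|e2 t]; simpl; try tauto.
  intros [[E1 H]|[E1 H]] [[E2 H']|[E2 H']].
  - subst. eapply IH; eauto.
  - congruence.
  - congruence.
  - eapply ltE_asym; eauto.
Qed.

Lemma arr_total : forall s t, s <> t -> arr s t \/ arr t s.
Proof.
  induction s as [|e1 s IH]; intros [|e2 t] H; simpl.
  - congruence.
  - destruct (classic (dbeats (e2 :: t))); tauto.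
  - destruct (classic (dbeats (e1 :: s))); tauto.
  - destruct (classic (e1 = e2)) as [E|E].
    + subst. assert (s <> t) by congruence. destruct (IH t); auto.
    + destruct (ltE_total e1 e2 E); [left|right]; right; auto.
Qed.

Lemma arr_app : forall p s t, arr (p ++ s) (p ++ t) <-> arr s t.
Proof.
  induction p as [|e p IH]; intros s t; simpl; [tauto|].
  rewrite IH. split; [intros [[_ H]|[H _]]; [auto|congruence]|intro H; left; auto].
Qed.

Lemma arr_cons_diff : forall c c' s t, c <> c' -> (arr (c :: s) (c' :: t) <-> ltE c c').
Proof. intros c c' s t Hc; simpl; split; [intros [[H1 _]|[_ H]]; [congruence|auto]|intro; right; auto]. Qed.

Lemma arr_anc : forall p r, r <> [] -> (arr (p ++ r) p <-> dbeats r).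
Proof.
  intros p r Hr. rewrite <- (app_nil_r p) at 2. rewrite arr_app.
  destruct r; [congruence|]. simpl. tauto.
Qed.

Definition prefix (s t : list E) := exists q, t = s ++ q.

Lemma trich : forall x d : list E,
  prefix x d \/ prefix d x \/
  exists p c1 c2 x' d', x = p ++ c1 :: x' /\ d = p ++ c2 :: d' /\ c1 <> c2.
Proof.
  induction x as [|c x IH]; intros d.
  - left. exists d; auto.
  - destruct d as [|c' d].
    + right; left. exists (c :: x); auto.
    + destruct (classic (c = c')) as [E|E].
      * subst c'. destruct (IH d) as [[q H]|[[q H]|[p [c1 [c2 [x' [d' [H1 [H2 H3]]]]]]]]].
        -- left. exists q. simpl; congruence.
        -- right; left. exists q. simpl; congruence.
        -- right; right. exists (c :: p), c1, c2, x', d'. simpl. subst. auto.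
      * right; right. exists [], c, c', x, d. auto.
Qed.

Lemma prefix_len : forall s t, prefix s t -> length s <= length t.
Proof. intros s t [q H]; subst; rewrite length_app; lia. Qed.

Lemma prefix_antisym : forall s t, prefix s t -> prefix t s -> s = t.
Proof.
  intros s t [q H] [q' H']. subst. rewrite <- app_assoc in H'.
  assert (Hl := f_equal (@length E) H'). rewrite !length_app in Hl.
  destruct q; simpl in *; [rewrite app_nil_r; auto|lia].
Qed.

Lemma diverge_not_prefix : forall p c1 c2 x' d', c1 <> c2 ->
  ~ prefix (p ++ c1 :: x') (p ++ c2 :: d').
Proof.
  intros p c1 c2 x' d' Hc [q H]. rewrite <- app_assoc in H. apply app_inv_head in H.
  simpl in H. congruence.
Qed.

Lemma two_prefix : forall s1 s2 t, prefix s1 t -> prefix s2 t -> prefix s1 s2 \/ prefix s2 s1.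
Proof.
  intros s1 s2 t H1 H2.
  destruct (trich s1 s2) as [H|[H|[p [c1 [c2 [x' [d' [E1 [E2 E3]]]]]]]]]; auto.
  exfalso. subst. destruct H1 as [q1 H1]. destruct H2 as [q2 H2]. rewrite H1 in H2.
  rewrite <- !app_assoc in H2. apply app_inv_head in H2. simpl in H2. congruence.
Qed.

Lemma cyclic_key : forall p c1 c2 y' z' x, c1 <> c2 ->
  arr (p ++ c1 :: y') (p ++ c2 :: z') -> arr x (p ++ c1 :: y') -> arr (p ++ c2 :: z') x ->
  prefix x p.
Proof.
  intros p c1 c2 y' z' x Hc Hyz Hxy Hzx.
  rewrite arr_app, arr_cons_diff in Hyz by auto.
  destruct (trich x p) as [H|[[q H]|[p0 [d1 [d2 [x' [p' [E1 [E2 E3]]]]]]]]]; auto.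
  - subst x. destruct q as [|c q]; [exists []; rewrite !app_nil_r; auto|].
    rewrite arr_app in Hxy, Hzx.
    destruct (classic (c = c1)) as [Ec1|Ec1].
    + subst c. exfalso. apply (arr_asym _ _ Hzx). apply arr_cons_diff; auto.
    + destruct (classic (c = c2)) as [Ec2|Ec2].
      * subst c. exfalso. apply (arr_asym _ _ Hxy). apply arr_cons_diff; auto.
      * rewrite arr_cons_diff in Hxy, Hzx by auto. exfalso.
        apply (ltE_irrefl c). eapply ltE_trans; [exact Hxy|]. eapply ltE_trans; eauto.
  - exfalso. subst x p. rewrite <- !app_assoc in *. simpl in *.
    rewrite arr_app in Hxy, Hzx. rewrite arr_cons_diff in Hxy by auto.
    rewrite arr_cons_diff in Hzx by auto. eapply ltE_asym; eauto.
Qed.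

Definition lab (e : E) : option (wo W) := snd (fst e).

Fixpoint vfrom (b : wo W) (s : list E) : Prop :=
  match s with
  | [] => True
  | e :: s' => match lab e with
               | None => s' = []
               | Some v => wlt v b /\ two_le W v /\ vfrom v s'
               end
  end.

Definition bopt (s : list E) : option (wo W) := lab (last s e0).
Definition ext (s : list E) : nat := match bopt s with None => 2 | Some _ => 0 end.

Lemma last_app_ne : forall (s r : list E) d, r <> [] -> last (s ++ r) d = last r d.
Proof.
  induction s as [|e s IH]; intros r d Hr; simpl; auto.
  rewrite IH by auto. destruct (s ++ r) eqn:Es; auto.
  apply app_eq_nil in Es; tauto.
Qed.

Lemma vfrom_app : forall b s r, vfrom b (s ++ r) -> s <> [] -> r <> [] ->
  exists v, bopt s = Some v /\ two_le W v /\ vfrom v r.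
Proof.
  intros b s. revert b. induction s as [|e s IH]; intros b r H Hs Hr; [congruence|].
  simpl in H. unfold bopt. destruct s as [|e' s].
  - simpl in *. destruct (lab e) as [v|] eqn:Ev.
    + exists v. tauto.
    + destruct r; [congruence|discriminate].
  - destruct (lab e) as [v|] eqn:Ev; [|discriminate].
    destruct H as [_ [_ H]]. destruct (IH v r H) as [v' Hv']; try congruence.
    exists v'. unfold bopt in Hv'. simpl last. simpl in Hv'. exact Hv'.
Qed.

Lemma vfrom_prefix : forall b s r, vfrom b (s ++ r) -> vfrom b s.
Proof.
  intros b s; revert b; induction s as [|e s IH]; intros b r H; simpl in *; auto.
  destruct (lab e) as [v|].
  - destruct H as [H1 [H2 H3]]; eauto.
  - apply app_eq_nil in H; tauto.
Qed.

Lemma vfrom_snoc : forall b s e v, vfrom b s -> s <> [] -> bopt s = Some v ->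
  (match lab e with None => True | Some v' => wlt v' v /\ two_le W v' end) ->
  vfrom b (s ++ [e]).
Proof.
  intros b s; revert b; induction s as [|e1 s IH]; intros b e v H Hs Hb He; [congruence|].
  destruct s as [|e2 s].
  - simpl in *. unfold bopt in Hb. simpl in Hb. rewrite Hb in *.
    destruct H as [H1 [H2 _]]. repeat split; auto.
    destruct (lab e) as [v'|]; simpl; auto. destruct He; auto.
  - simpl in H |- *. destruct (lab e1) as [v1|] eqn:E1; [|discriminate].
    destruct H as [H1 [H2 H3]]. repeat split; auto.
    change (vfrom v1 ((e2 :: s) ++ [e])). apply IH with v; auto; congruence.
Qed.

Lemma vfrom_sib : forall b p z z' phi phi',
  vfrom b (p ++ [(z, None, phi)]) -> vfrom b (p ++ [(z', None, phi')]).
Proof.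
  intros b p; revert b; induction p as [|e p IH]; intros b z z' phi phi' H.
  - simpl. unfold lab. simpl. auto.
  - simpl in *. destruct (lab e).
    + destruct H as [H1 [H2 H3]]; eauto.
    + apply app_eq_nil in H. destruct H; discriminate.
Qed.

Lemma vfrom_two : forall b s v, vfrom b s -> s <> [] -> bopt s = Some v -> two_le W v.
Proof.
  intros b s v H Hs Hb. destruct (@exists_last _ s Hs) as [s0 [e Es]]. subst s.
  unfold bopt in Hb. rewrite last_app_ne in Hb by discriminate. simpl in Hb.
  destruct s0 as [|e1 s0].
  - simpl in H. rewrite Hb in H. tauto.
  - assert (Hn : e1 :: s0 <> []) by discriminate.
    destruct (vfrom_app b (e1 :: s0) [e] H Hn) as [v' [_ [_ H']]]; [discriminate|].
    simpl in H'. rewrite Hb in H'. tauto.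
Qed.

Fixpoint cntR (M : list E -> Prop) (p r : list E) : nat :=
  match r with
  | [] => 0
  | c :: r' => (if excluded_middle_informative (M (p ++ [c])) then 0 else 1)
               + cntR M (p ++ [c]) r'
  end.

Lemma cntR_ext : forall M M' p r, (forall s, M s <-> M' s) -> cntR M p r = cntR M' p r.
Proof.
  intros M M' p r H; revert p; induction r as [|c r IH]; intro p; simpl; auto.
  rewrite IH. destruct (excluded_middle_informative (M (p ++ [c])));
  destruct (excluded_middle_informative (M' (p ++ [c]))); auto; exfalso; firstorder.
Qed.

Lemma cntR_app : forall M p r1 r2, cntR M p (r1 ++ r2) = cntR M p r1 + cntR M (p ++ r1) r2.
Proof.
  intros M p r1; revert p; induction r1 as [|c r1 IH]; intros p r2; simpl.
  - rewrite app_nil_r; auto.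
  - rewrite IH. rewrite <- app_assoc. simpl. lia.
Qed.

Lemma cntR_same : forall M x p r, (forall q, p ++ q = x -> q = [] \/ ~ prefix q r) ->
  cntR (fun s => s = x \/ M s) p r = cntR M p r.
Proof.
  intros M x p r; revert p; induction r as [|c r IH]; intros p H; simpl; auto.
  rewrite IH.
  - f_equal. destruct (excluded_middle_informative (p ++ [c] = x \/ M (p ++ [c]))) as [o|o];
      destruct (excluded_middle_informative (M (p ++ [c]))) as [m|m]; auto; try tauto.
    exfalso. destruct o as [o|o]; [|tauto].
    destruct (H [c] o) as [H'|H']; [discriminate|]. apply H'. exists r; auto.
  - intros q Hq. rewrite <- app_assoc in Hq. destruct (H _ Hq) as [H'|H']; [discriminate|].
    right. intros [q' Hq']. apply H'. exists q'. simpl. congruence.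
Qed.

Lemma cntR_drop : forall M x p r q, x = p ++ q -> q <> [] -> prefix q r -> ~ M x ->
  cntR M p r = S (cntR (fun s => s = x \/ M s) p r).
Proof.
  intros M x p r; revert p; induction r as [|c r IH]; intros p q Hx Hq [q' Hr] HM.
  - destruct q; [congruence|discriminate].
  - destruct q as [|c' q]; [congruence|]. simpl in Hr. injection Hr; intros Hr' Ec; subst c'.
    simpl. destruct q as [|c2 q].
    +
      rewrite (cntR_same M x (p ++ [c]) r).
      * destruct (excluded_middle_informative (M (p ++ [c]))) as [h|h];
          [subst; contradiction|].
        destruct (excluded_middle_informative (p ++ [c] = x \/ M (p ++ [c]))) as [h'|h'];
          [|exfalso; apply h'; left; auto]. lia.
      * intros q0 Hq0. subst x. rewrite <- app_assoc in Hq0. simpl in Hq0.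
        apply app_inv_head in Hq0. left. injection Hq0; auto.
    + rewrite (IH (p ++ [c]) (c2 :: q)); auto.
      * destruct (excluded_middle_informative (M (p ++ [c]))) as [h|h];
        destruct (excluded_middle_informative (p ++ [c] = x \/ M (p ++ [c]))) as [h'|h'];
          try lia; try tauto.
        exfalso. destruct h' as [h'|h']; [|tauto]. subst x.
        apply app_inv_head in h'. simpl in h'. discriminate.
      * subst x. rewrite <- app_assoc. auto.
      * discriminate.
      * exists q'. auto.
Qed.

Lemma cntR_full : forall M p r, r <> [] -> (forall s, M s -> length s <= length p) ->
  cntR (fun s => s = p ++ r \/ M s) p r = length r - 1.
Proof.
  intros M p r; revert p; induction r as [|c r IH]; intros p Hr HM; [congruence|].
  simpl. destruct r as [|c2 r].
  - simpl. destruct (excluded_middle_informative (p ++ [c] = p ++ [c] \/ M (p ++ [c]))); [|tauto].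
    lia.
  - rewrite (cntR_ext _ (fun s => s = (p ++ [c]) ++ c2 :: r \/ M s)).
    + rewrite IH; [|discriminate|].
      * destruct (excluded_middle_informative (p ++ [c] = p ++ c :: c2 :: r \/ M (p ++ [c]))) as [h|h].
        -- exfalso. destruct h as [h|h].
           ++ apply app_inv_head in h. discriminate.
           ++ apply HM in h. rewrite length_app in h. simpl in h. lia.
        -- simpl. lia.
      * intros s Hs. apply HM in Hs. rewrite length_app. lia.
    + intro s. rewrite <- app_assoc. simpl. tauto.
Qed.

Lemma cntR_le : forall M p r1 r2, cntR M p r1 <= cntR M p (r1 ++ r2).
Proof. intros. rewrite cntR_app. lia. Qed.

End Tree.

Section Build.
Variable W : wellorder.
Variable a : wo W.
Hypothesis Ha : two_le W a.

Notation E := (E W).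
Definition V : Type := {s : list E | s <> [] /\ vfrom W a s}.
Definition raw (x : V) : list E := proj1_sig x.

Lemma raw_inj : forall x y : V, raw x = raw y -> x = y.
Proof.
  intros [s hs] [t ht] H. unfold raw in H; simpl in H. subst t.
  rewrite (proof_irrelevance _ hs ht). reflexivity.
Qed.

Definition tarrV (x y : V) : Prop := arr W (raw x) (raw y).
Lemma tarrV_asym : forall x y, tarrV x y -> ~ tarrV y x.
Proof. intros x y; apply arr_asym. Qed.
Lemma tarrV_total : forall x y, x <> y -> tarrV x y \/ tarrV y x.
Proof. intros x y H. apply arr_total. intro E0; apply H, raw_inj, E0. Qed.

Definition XT : tournament := Tournament V tarrV tarrV_asym tarrV_total.

Definition Mem (F : list V) (s : list E) : Prop := In s (map raw F).
Definition cnt (F : list V) (d : list E) : nat := cntR W (Mem F) [] d.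
Definition chainmax (F : list V) (d : list E) := Mem F d /\ forall s, Mem F s -> prefix W s d.

Lemma Mem_cons : forall x F s, Mem (x :: F) s <-> s = raw x \/ Mem F s.
Proof. intros; unfold Mem; simpl; split; intros [H|H]; auto. Qed.

Lemma Mem_in : forall F f, In f F -> Mem F (raw f).
Proof. intros; apply in_map; auto. Qed.

Lemma Mem_ex : forall F s, Mem F s -> exists f, In f F /\ raw f = s.
Proof. intros F s H. apply in_map_iff in H. destruct H as [f [H1 H2]]; eauto. Qed.

Lemma Mem_nonempty : forall F s, Mem F s -> s <> [].
Proof. intros F s H. destruct (Mem_ex F s H) as [f [_ E1]]. subst s. destruct f as [t ht]. exact (proj1 ht). Qed.

Lemma Mem_notin : forall F x, ~ In x F -> ~ Mem F (raw x).
Proof. intros F x H H'. destruct (Mem_ex F _ H') as [f [H1 H2]]. apply raw_inj in H2. subst; auto. Qed.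

Lemma cnt_cons : forall x F d, cnt (x :: F) d = cntR W (fun s => s = raw x \/ Mem F s) [] d.
Proof. intros; unfold cnt; apply cntR_ext; intro; apply Mem_cons. Qed.

Definition Up (w : wo W) (F : list V) : Prop :=
  ((forall y, ~ In y F) -> wle W w a) /\
  (forall d, chainmax F d -> ladd W (bopt W d) (cnt F d + ext W d) w) /\
  (forall y z p c1 c2 y' z', Mem F y -> Mem F z -> y = p ++ c1 :: y' -> z = p ++ c2 :: z' ->
     c1 <> c2 -> ladd W None (S (cnt F p)) w).

Lemma prefix_snoc : forall (y s : list E) e, prefix W y (s ++ [e]) <-> prefix W y s \/ y = s ++ [e].
Proof.
  intros y s e. split.
  - intros [q H].
    destruct q as [|c q]; [right; rewrite app_nil_r in H; auto|].
    destruct (@exists_last _ (c :: q)) as [q0 [e' Eq]]; [discriminate|].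
    rewrite Eq in H. rewrite app_assoc in H. apply app_inj_tail in H. destruct H; subst.
    left; exists q0; auto.
  - intros [[q H]|H]; [exists (q ++ [e]); subst; rewrite app_assoc; auto|exists []; rewrite app_nil_r; auto].
Qed.

Lemma bopt_app : forall (d r : list E), r <> [] -> bopt W (d ++ r) = bopt W r.
Proof. intros d r Hr; unfold bopt; rewrite last_app_ne; auto. Qed.

Lemma ext_app : forall (d r : list E), r <> [] -> ext W (d ++ r) = ext W r.
Proof. intros d r Hr; unfold ext; rewrite bopt_app; auto. Qed.

Lemma desc_bound : forall r c, vfrom W c r -> r <> [] -> two_le W c ->
  forall k v w, ladd W (bopt W r) (k + (length r - 1) + ext W r) v -> pred_of W v w ->
  ladd W (Some c) k w.
Proof.
  induction r as [|e r IH]; intros c Hv Hr Hc k v w H Hp; [congruence|].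
  destruct r as [|e2 r].
  - assert (Hb : bopt W [e] = lab W e) by reflexivity. unfold ext in H. rewrite Hb in H.
    simpl in Hv. simpl length in H. destruct (lab W e) as [u|] eqn:Eu.
    + destruct Hv as [Hu _]. eapply ladd_B; eauto. replace k with (k + 0 + 0) by lia. exact H.
    + eapply ladd_A; eauto. replace (S (S k)) with (k + 0 + 2) by lia. exact H.
  - simpl in Hv. destruct (lab W e) as [u|] eqn:Eu; [|discriminate].
    destruct Hv as [Hu [Htu Hv]].
    assert (Hb : bopt W (e :: e2 :: r) = bopt W (e2 :: r)) by (apply (bopt_app [e] (e2 :: r)); discriminate).
    assert (He : ext W (e :: e2 :: r) = ext W (e2 :: r)) by (apply (ext_app [e] (e2 :: r)); discriminate).
    rewrite Hb, He in H.
    apply ladd_C with u; auto.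
    apply (IH u Hv ltac:(discriminate) Htu (S k) v w); auto.
    simpl length in *. replace (S k + (S (length r) - 1)) with (k + (S (S (length r)) - 1)) by lia.
    exact H.
Qed.

Lemma min_nat : forall P : nat -> Prop, (exists n, P n) -> exists n, P n /\ forall k, P k -> n <= k.
Proof.
  intros P [n Hn]. induction n as [n IH] using (well_founded_induction lt_wf).
  destruct (classic (exists k, k < n /\ P k)) as [[k [Hk1 Hk2]]|Hno].
  - apply (IH k); auto.
  - exists n. split; auto. intros k Hk. destruct (Nat.lt_ge_cases k n); auto. exfalso; eauto.
Qed.

Lemma chain_max : forall L : list (list E), L <> [] ->
  (forall y z, In y L -> In z L -> prefix W y z \/ prefix W z y) ->
  exists d, In d L /\ forall s, In s L -> prefix W s d.
Proof.
  induction L as [|y L IH]; intros HL Hc; [congruence|].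
  destruct L as [|y2 L].
  - exists y. split; [left; auto|]. intros s [Hs|[]]; subst. exists []; rewrite app_nil_r; auto.
  - destruct IH as [d [Hd1 Hd2]]; [discriminate|intros; apply Hc; right; auto|].
    destruct (Hc y d (or_introl eq_refl) (or_intror Hd1)) as [H|H].
    + exists d. split; [right; auto|]. intros s [Hs|Hs]; [subst; auto|auto].
    + exists y. split; [left; auto|]. intros s [Hs|Hs]; [subst; exists []; rewrite app_nil_r; auto|].
      destruct (Hd2 s Hs) as [q1 E1]. destruct H as [q2 E2]. exists (q1 ++ q2). subst.
      rewrite app_assoc; auto.
Qed.

Lemma prefix_refl : forall s : list E, prefix W s s.
Proof. intro s; exists []; rewrite app_nil_r; auto. Qed.

Lemma prefix_trans : forall s t u : list E, prefix W s t -> prefix W t u -> prefix W s u.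
Proof. intros s t u [q1 E1] [q2 E2]. exists (q1 ++ q2). subst. rewrite app_assoc; auto. Qed.

Lemma not_prefix_longer : forall (p x : list E) c x', ~ prefix W (p ++ c :: x') p.
Proof.
  intros p x c x' H. apply prefix_len in H. rewrite length_app in H. simpl in H. lia.
Qed.
End Build.

Section Up.
Variable W : wellorder.
Variable a : wo W.
Hypothesis Ha : two_le W a.
Notation E := (E W).
Notation V := (V W a).
Notation raw := (raw W a).
Notation Mem := (Mem W a).
Notation cnt := (cnt W a).
Notation chainmax := (chainmax W a).
Notation X := (XT W a).
Notation Up := (Up W a).
Notation prefix := (prefix W).

Lemma Up_inv : forall w F G, seteq X F G -> Up w F -> Up w G.
Proof.
  intros w F G H [U1 [U2 U3]].
  assert (HM : forall s, Mem F s <-> Mem G s).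
  { intro s; split; intro Hs; destruct (Mem_ex W a _ _ Hs) as [f [H1 H2]]; subst;
    apply Mem_in; apply H; auto. }
  assert (HC : forall d, cnt F d = cnt G d) by (intro d; apply cntR_ext; auto).
  split; [|split].
  - intro Hn. apply U1. intros y Hy. apply (Hn y). apply H; auto.
  - intros d [Hd1 Hd2]. rewrite <- HC. apply U2. split; [apply HM; auto|].
    intros s Hs; apply Hd2, HM; auto.
  - intros y z p c1 c2 y' z' Hy Hz E1 E2 E3. rewrite <- HC.
    apply (U3 y z p c1 c2 y' z'); auto; apply HM; auto.
Qed.

Lemma wle_min : forall w c, (forall v, ~ wlt W v w) -> wle W w c.
Proof.
  intros w c H. destruct (wlt_total W w c) as [E1|[E1|E1]]; [left|right|]; auto.
  exfalso; eapply H; eauto.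
Qed.

Lemma ladd_opt_min : forall d k w, (forall v, ~ wlt W v w) -> ladd W (bopt W d) (k + ext W d) w.
Proof.
  intros d k w H. unfold ext. destruct (bopt W d).
  - apply ladd_min_Some; auto.
  - replace (k + 2) with (S (k + 1)) by lia. apply ladd_min_S; auto.
Qed.

Lemma Up_min : forall w F, (forall v, ~ wlt W v w) -> Up w F.
Proof.
  intros w F H. split; [|split].
  - intros _. apply wle_min; auto.
  - intros d _. apply ladd_opt_min; auto.
  - intros. apply ladd_min_S; auto.
Qed.

Lemma Up_lim : forall w F, (exists v, wlt W v w) ->
  (forall v, wlt W v w -> exists u, wlt W v u /\ wlt W u w) ->
  (forall v, wlt W v w -> Up v F) -> Up w F.
Proof.
  intros w F H1 H2 H. split; [|split].
  - intro Hn. change (ladd W (Some a) 0 w). apply ladd_lim; auto.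
    intros v Hv. apply (proj1 (H v Hv)); auto.
  - intros d Hd. apply ladd_lim; auto. intros v Hv. apply (proj1 (proj2 (H v Hv))); auto.
  - intros y z p c1 c2 y' z' Hy Hz E1 E2 E3. apply ladd_lim; auto. intros v Hv.
    exact (proj2 (proj2 (H v Hv)) y z p c1 c2 y' z' Hy Hz E1 E2 E3).
Qed.

Lemma diverge_ne : forall (p : list E) c1 c2 y' z', c1 <> c2 -> p ++ c1 :: y' <> p ++ c2 :: z'.
Proof. intros p c1 c2 y' z' Hc Heq. apply app_inv_head in Heq. congruence. Qed.

Lemma diverge_incomp : forall (p d : list E) c1 c2 y' z', c1 <> c2 ->
  prefix (p ++ c1 :: y') d -> prefix (p ++ c2 :: z') d -> False.
Proof.
  intros p d c1 c2 y' z' Hc H1 H2.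
  destruct (two_prefix W _ _ _ H1 H2) as [H|H].
  - eapply diverge_not_prefix; eauto.
  - eapply diverge_not_prefix; [|exact H]; auto.
Qed.

Definition nonchain (F : list V) := exists y z p c1 c2 y' z', Mem F y /\ Mem F z /\
  y = p ++ c1 :: y' /\ z = p ++ c2 :: z' /\ c1 <> c2.

Lemma step_nonchain : forall F, nonchain F -> exists t : V -> Prop,
  forall w v x, pred_of W v w -> realizes X F t x -> Up v (x :: F) -> Up w F.
Proof.
  intros F HN.
  destruct (min_nat (fun n => exists y z p c1 c2 y' z', Mem F y /\ Mem F z /\
     y = p ++ c1 :: y' /\ z = p ++ c2 :: z' /\ c1 <> c2 /\ n = cnt F p)) as [m [Hm Hmin]].
  { destruct HN as [y [z [p [c1 [c2 [y' [z' H]]]]]]]. exists (cnt F p), y, z, p, c1, c2, y', z'. tauto. }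
  destruct Hm as [y0 [z0 [p [c1 [c2 [y' [z' [Hy [Hz [Ey [Ez [Hc Hmp]]]]]]]]]]]].
  assert (Hor : exists y z c1 c2 y' z', Mem F y /\ Mem F z /\ y = p ++ c1 :: y' /\
            z = p ++ c2 :: z' /\ c1 <> c2 /\ arr W y z).
  { destruct (arr_total W y0 z0) as [H|H].
    - subst; apply diverge_ne; auto.
    - exists y0, z0, c1, c2, y', z'. tauto.
    - exists z0, y0, c2, c1, z', y'. repeat split; auto. }
  clear y0 z0 c1 c2 y' z' Hy Hz Ey Ez Hc.
  destruct Hor as [y [z [c1 [c2 [y' [z' [Hy [Hz [Ey [Ez [Hc Hyz]]]]]]]]]]].
  destruct (Mem_ex W a _ _ Hy) as [fy [Hfy Efy]].
  destruct (Mem_ex W a _ _ Hz) as [fz [Hfz Efz]].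
  exists (fun f => f = fy).
  intros w v x Hp [Hx Hr] HU.
  assert (Hxy : arr W (raw x) y).
  { rewrite <- Efy. apply (Hr fy Hfy). auto. }
  assert (Hzx : arr W z (raw x)).
  { assert (Hn : ~ tarrV W a x fz).
    { intro H. apply (Hr fz Hfz) in H. subst fz. rewrite Efy in Efz.
      rewrite Ey, Ez in Efz. apply (diverge_ne p c1 c2 y' z'); auto. }
    destruct (arr_total W (raw x) z) as [H|H]; auto.
    - intro E1. apply Hx. rewrite <- Efz in E1. apply raw_inj in E1. subst; auto.
    - exfalso. apply Hn. unfold tarrV. rewrite Efz. exact H. }
  rewrite Ey in Hxy, Hyz. rewrite Ez in Hzx, Hyz.
  assert (Hpre : prefix (raw x) p) by (eapply cyclic_key; eauto).
  destruct Hpre as [q Hq].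
  assert (Hcnt : cnt F p = S (cnt (x :: F) p)).
  { rewrite cnt_cons. unfold cnt. apply (cntR_drop W _ (raw x) [] p (raw x)); auto.
    - exact (proj1 (proj2_sig x)).
    - exists q; auto.
    - apply Mem_notin; auto. }
  destruct HU as [_ [_ U3]].
  assert (Hv : ladd W None (S (cnt (x :: F) p)) v).
  { apply (U3 y z p c1 c2 y' z'); auto; apply Mem_cons; right; auto. }
  split; [|split].
  - intro Hn. exfalso. apply (Hn fy); auto.
  - intros d [Hd1 Hd2]. exfalso.
    apply (diverge_incomp p d c1 c2 y' z'); auto; [rewrite <- Ey|rewrite <- Ez]; apply Hd2; auto.
  - intros y2 z2 p2 d1 d2 y2' z2' Hy2 Hz2 Ey2 Ez2 Hd.
    assert (Hle : m <= cnt F p2) by (apply Hmin; exists y2, z2, p2, d1, d2, y2', z2'; tauto).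
    apply ladd_mono with (S (cnt F p)); [lia|].
    rewrite Hcnt. eapply ladd_succ; eauto.
Qed.

End Up.

Section Up2.
Variable W : wellorder.
Variable a : wo W.
Hypothesis Ha : two_le W a.
Notation E := (E W).
Notation V := (V W a).
Notation raw := (raw W a).
Notation Mem := (Mem W a).
Notation cnt := (cnt W a).
Notation chainmax := (chainmax W a).
Notation X := (XT W a).
Notation Up := (Up W a).
Notation prefix := (prefix W).

Lemma raw_valid : forall x : V, raw x <> [] /\ vfrom W a (raw x).
Proof. intro x; exact (proj2_sig x). Qed.

Lemma chainmax_unique : forall F d d', chainmax F d -> chainmax F d' -> d = d'.
Proof.
  intros F d d' [H1 H2] [H1' H2']. apply prefix_antisym; auto.
Qed.

Lemma step_chain : forall F d, chainmax F d -> ~ nonchain W a F ->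
  forall w v x, pred_of W v w -> realizes X F (fun _ => True) x -> Up v (x :: F) -> Up w F.
Proof.
  intros F d [Hd1 Hd2] HNC w v x Hp [Hx _] [_ [U2 U3]].
  assert (Hxd : raw x <> d).
  { intro E1. apply (Mem_notin W a F x Hx). rewrite E1; auto. }
  assert (Hdne : d <> []) by (eapply Mem_nonempty; eauto).
  destruct (raw_valid x) as [Hxne Hxv].
  assert (Goal : ladd W (bopt W d) (cnt F d + ext W d) w -> Up w F).
  { intro H. split; [|split].
    - intro Hn. exfalso. destruct (Mem_ex W a _ _ Hd1) as [f [Hf _]]. apply (Hn f); auto.
    - intros d' Hd'. rewrite <- (chainmax_unique F d d'); auto. split; auto.
    - intros y z p c1 c2 y' z' Hy Hz Ey Ez Hc. exfalso. apply HNC.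
      exists y, z, p, c1, c2, y', z'. tauto. }
  apply Goal.
  destruct (trich W (raw x) d) as [[q Hq]|[[r Hr]|[p [c1 [c2 [x' [d' [Ex [Ed Hc]]]]]]]]].
  -
    assert (Hcnt : cnt F d = S (cnt (x :: F) d)).
    { rewrite cnt_cons. unfold cnt. apply (cntR_drop W _ (raw x) [] d (raw x)); auto.
      - exists q; auto.
      - apply Mem_notin; auto. }
    assert (Hch : chainmax (x :: F) d).
    { split; [apply Mem_cons; right; auto|]. intros s Hs. apply Mem_cons in Hs.
      destruct Hs as [Hs|Hs]; [subst; exists q; auto|auto]. }
    specialize (U2 d Hch). rewrite Hcnt.
    replace (S (cnt (x :: F) d) + ext W d) with (S (cnt (x :: F) d + ext W d)) by lia.
    eapply ladd_succ; eauto.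
  -
    assert (Hrne : r <> []) by (intro E1; subst r; rewrite app_nil_r in Hr; auto).
    rewrite Hr in Hxv.
    destruct (vfrom_app W a d r Hxv Hdne Hrne) as [vd [Hbd [Htd Hvr]]].
    assert (Hch : chainmax (x :: F) (raw x)).
    { split; [apply Mem_cons; left; auto|]. intros s Hs. apply Mem_cons in Hs.
      destruct Hs as [Hs|Hs]; [subst; apply prefix_refl|].
      apply prefix_trans with d; auto. exists r; auto. }
    specialize (U2 _ Hch).
    assert (Hcnt : cnt (x :: F) (raw x) = cnt F d + (length r - 1)).
    { rewrite cnt_cons, Hr. rewrite cntR_app.
      rewrite (cntR_same W (Mem F) (d ++ r) [] d).
      - change ([] ++ d) with d. rewrite (cntR_full W (Mem F) d r); auto.
        intros s Hs. apply prefix_len. auto.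
      - intros q Hq. right. simpl in Hq. subst q. intro Hpre. apply prefix_len in Hpre.
        rewrite length_app in Hpre. destruct r; [congruence|simpl in Hpre; lia]. }
    rewrite Hcnt, Hr in U2. rewrite bopt_app, ext_app in U2 by auto.
    rewrite Hbd. unfold ext at 1. rewrite Hbd. rewrite Nat.add_0_r.
    eapply desc_bound; eauto.
  -
    assert (Hv : ladd W None (S (cnt (x :: F) p)) v).
    { apply (U3 (raw x) d p c1 c2 x' d'); auto; apply Mem_cons; auto. }
    assert (Hc1 : cnt (x :: F) p = cnt F p).
    { rewrite cnt_cons. apply cntR_same. intros q Hq. right. simpl in Hq. subst q.
      rewrite Ex. apply (not_prefix_longer W); auto. }
    assert (Hc2 : cnt F p <= cnt F d) by (rewrite Ed; apply cntR_le).
    rewrite Hc1 in Hv.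
    assert (Hv' : ladd W None (S (S (cnt F d))) v) by (apply ladd_mono with (S (cnt F p)); auto; lia).
    unfold ext. destruct (bopt W d) as [vd|] eqn:Hbd.
    + rewrite Nat.add_0_r. apply ladd_A with v; auto.
      destruct (Mem_ex W a _ _ Hd1) as [f [_ Ef]]. destruct (raw_valid f) as [Hf1 Hf2].
      rewrite Ef in Hf1, Hf2. eapply vfrom_two; eauto.
    + replace (cnt F d + 2) with (S (S (cnt F d))) by lia.
      eapply ladd_succ; eauto. apply ladd_mono with (S (cnt F p)); auto; lia.
Qed.

Lemma step_empty : forall F, (forall y, ~ In y F) ->
  forall w v x, pred_of W v w -> realizes X F (fun _ => True) x -> Up v (x :: F) -> Up w F.
Proof.
  intros F HF w v x Hp [Hx _] [_ [U2 _]].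
  destruct (raw_valid x) as [Hxne Hxv].
  assert (HM : forall s, ~ Mem F s) by (intros s Hs; destruct (Mem_ex W a _ _ Hs) as [f [Hf _]]; eapply HF; eauto).
  split; [|split].
  - intros _.
    assert (Hch : chainmax (x :: F) (raw x)).
    { split; [apply Mem_cons; left; auto|]. intros s Hs. apply Mem_cons in Hs.
      destruct Hs as [Hs|Hs]; [subst; apply prefix_refl|exfalso; eapply HM; eauto]. }
    specialize (U2 _ Hch).
    assert (Hcnt : cnt (x :: F) (raw x) = 0 + (length (raw x) - 1)).
    { rewrite cnt_cons. rewrite (cntR_ext W _ (fun s => s = [] ++ raw x \/ (fun _ => False) s)).
      - apply cntR_full; auto; intros s [].
      - intro s. simpl. split; intros [H|H]; auto; [exfalso; eapply HM; eauto|contradiction]. }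
    rewrite Hcnt in U2. change (wle W w a) with (ladd W (Some a) 0 w).
    eapply desc_bound; eauto.
  - intros d [Hd _]. exfalso; eapply HM; eauto.
  - intros y. intros. exfalso; eapply HM; eauto.
Qed.

Lemma Up_step : forall F, exists t : V -> Prop,
  forall w v x, pred_of W v w -> realizes X F t x -> Up v (x :: F) -> Up w F.
Proof.
  intro F.
  destruct (classic (nonchain W a F)) as [HN|HN].
  - apply step_nonchain; auto.
  - exists (fun _ => True).
    destruct (classic (exists y, In y F)) as [[y Hy]|Hn].
    + assert (Hmax : exists d, chainmax F d).
      { destruct (chain_max W (map raw F)) as [d [Hd1 Hd2]].
        - intro E1. destruct F; [destruct Hy|discriminate].
        - intros s1 s2 H1 H2. destruct (trich W s1 s2) as [H|[H|[p [c1 [c2 [x' [d' [E1 [E2 E3]]]]]]]]]; auto.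
          exfalso. apply HN. exists s1, s2, p, c1, c2, x', d'. unfold Mem. tauto.
        - exists d; split; auto. }
      destruct Hmax as [d Hd]. intros; eapply step_chain; eauto.
    + intros; eapply step_empty; eauto.
Qed.

Theorem tree_upper : forall w F, rkge X W w F -> Up w F.
Proof.
  apply upper_bound.
  - apply Up_inv.
  - apply Up_min.
  - apply Up_lim.
  - apply Up_step.
Qed.

End Up2.

Section Low.
Variable W : wellorder.
Variable a : wo W.
Hypothesis Ha : two_le W a.
Notation E := (E W).
Notation V := (V W a).
Notation raw := (raw W a).
Notation Mem := (Mem W a).
Notation X := (XT W a).
Notation prefix := (prefix W).

Definition Lo (w : wo W) (F : list V) : Prop :=
  ((forall y, ~ In y F) /\ wle W w a) \/
  (exists s, s <> [] /\ vfrom W a s /\ (forall y, Mem F y <-> (y <> [] /\ prefix y s)) /\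
             ladd W (bopt W s) (ext W s) w) \/
  (forall u, ~ wlt W u w).

Definition dec (P : Prop) : bool := if excluded_middle_informative P then true else false.
Lemma dec_true : forall P, dec P = true <-> P.
Proof. intro P; unfold dec; destruct (excluded_middle_informative P); split; auto; discriminate. Qed.

Definition phi_of (s : list E) (T : list E -> Prop) : list bool :=
  map (fun i => dec (T (firstn (length s - i) s))) (seq 0 (length s)).

Lemma phi_nth : forall s T y q, s = y ++ q -> y <> [] ->
  (nth (length q) (phi_of s T) false = true <-> T y).
Proof.
  intros s T y q Hs Hy. unfold phi_of.
  assert (Hl : length q < length s) by (subst; rewrite length_app; destruct y; [congruence|simpl; lia]).
  set (f := fun i => dec (T (firstn (length s - i) s))).
  replace (nth (length q) (map f (seq 0 (length s))) false) with (f (length q)).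
  2:{ rewrite (nth_indep _ false (f 0)) by (rewrite length_map, length_seq; auto).
      rewrite map_nth. rewrite seq_nth by auto. reflexivity. }
  unfold f.
  replace (length s - length q) with (length y) by (subst; rewrite length_app; lia).
  rewrite Hs, firstn_app, firstn_all, Nat.sub_diag. simpl. rewrite app_nil_r. apply dec_true.
Qed.

Lemma dbeats_snoc : forall (q : list E) e, dbeats W (q ++ [e]) <-> nth (length q) (snd e) false = true.
Proof.
  intros q e. unfold dbeats. rewrite last_app_ne by discriminate. simpl.
  rewrite length_app. simpl. replace (length q + 1 - 1) with (length q) by lia. tauto.
Qed.

Lemma anc_rel : forall (y q : list E) e, y <> [] ->
  (arr W (y ++ q ++ [e]) y <-> nth (length q) (snd e) false = true).
Proof.
  intros y q e Hy. rewrite arr_anc by (destruct q; discriminate).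
  apply dbeats_snoc.
Qed.

Lemma prefix_single : forall (y : list E) e, y <> [] -> prefix y [e] -> y = [e].
Proof.
  intros y e Hy [q H]. destruct y as [|c y]; [congruence|]. simpl in H. injection H; intros H1 H2.
  subst. destruct y; [auto|discriminate].
Qed.

Lemma Lo_down : forall w v F, wlt W v w -> Lo w F -> Lo v F.
Proof.
  intros w v F Hv [[H1 H2]|[[s [H1 [H2 [H3 H4]]]]|H]].
  - left. split; auto. left. eapply wle_trans_lt; eauto.
  - right; left. exists s. repeat split; auto; try apply H3; auto.
    eapply ladd_down; eauto.
  - exfalso. eapply H; eauto.
Qed.

Definition mkV (s : list E) (h1 : s <> []) (h2 : vfrom W a s) : V := exist _ s (conj h1 h2).

Lemma Lo_step : forall w v F, pred_of W v w -> Lo w F ->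
  forall t : V -> Prop, exists x, realizes X F t x /\ Lo v (x :: F).
Proof.
  intros w v F Hp HL t.
  set (T := fun s : list E => exists f, In f F /\ raw f = s /\ t f).
  assert (HT : forall f, In f F -> (T (raw f) <-> t f)).
  { intros f Hf. unfold T. split; [|intro; exists f; auto].
    intros [f' [_ [E1 H]]]. apply raw_inj in E1. subst; auto. }
  destruct HL as [[H1 H2]|[[s [Hs1 [Hs2 [Hs3 Hs4]]]]|H]].
  -
    assert (Hva : wlt W v a) by (eapply wle_trans_lt; [apply Hp|auto]).
    destruct (classic (two_le W v)) as [Ht|Ht].
    + set (e := (0%Z, Some v, @nil bool) : E).
      assert (h2 : vfrom W a [e]) by (simpl; unfold lab; simpl; auto).
      exists (mkV [e] ltac:(discriminate) h2). split.
      * split; [apply H1|]. intros y Hy; exfalso; eapply H1; eauto.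
      * right; left. exists [e]. split; [discriminate|split; [auto|split]].
        -- intro y; split.
           ++ intro Hy. apply Mem_cons in Hy. destruct Hy as [Hy|Hy].
              ** subst; split; [discriminate|apply prefix_refl].
              ** exfalso. destruct (Mem_ex W a _ _ Hy) as [f [Hf _]]. eapply H1; eauto.
           ++ intros [Hy1 Hy2]. apply Mem_cons. left. apply prefix_single; auto.
        -- simpl. right; auto.
    + set (e := (0%Z, @None (wo W), @nil bool) : E).
      assert (h2 : vfrom W a [e]) by (simpl; unfold lab; simpl; auto).
      exists (mkV [e] ltac:(discriminate) h2). split.
      * split; [apply H1|]. intros y Hy; exfalso; eapply H1; eauto.
      * right; left. exists [e]. split; [discriminate|split; [auto|split]].
        -- intro y; split.
           ++ intro Hy. apply Mem_cons in Hy. destruct Hy as [Hy|Hy].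
              ** subst; split; [discriminate|apply prefix_refl].
              ** exfalso. destruct (Mem_ex W a _ _ Hy) as [f [Hf _]]. eapply H1; eauto.
           ++ intros [Hy1 Hy2]. apply Mem_cons. left. apply prefix_single; auto.
        -- apply not_two_le_ladd; auto.
  -
    destruct (bopt W s) as [vs|] eqn:Hbs.
    +
      unfold ext in Hs4. rewrite Hbs in Hs4. simpl in Hs4.
      assert (Hvs : wlt W v vs) by (eapply wle_trans_lt; [apply Hp|auto]).
      set (L := if excluded_middle_informative (two_le W v) then Some v else None).
      set (e := (0%Z, L, phi_of s T) : E).
      assert (h2 : vfrom W a (s ++ [e])).
      { apply vfrom_snoc with vs; auto. unfold lab, e, L; simpl.
        destruct (excluded_middle_informative (two_le W v)); auto. }
      assert (h1 : s ++ [e] <> []) by (destruct s; discriminate).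
      exists (mkV (s ++ [e]) h1 h2). split.
      * split.
        -- intro Hx. apply Mem_in in Hx. apply Hs3 in Hx. destruct Hx as [_ Hx].
           apply prefix_len in Hx. simpl in Hx. rewrite length_app in Hx. simpl in Hx. lia.
        -- intros f Hf. rewrite <- HT by auto.
           destruct (proj1 (Hs3 _) (Mem_in W a _ _ Hf)) as [Hf1 [q Hq]].
           unfold tarr, XT, tarrV. simpl. change (raw (mkV (s ++ [e]) h1 h2)) with (s ++ [e]).
           rewrite Hq at 1. rewrite <- app_assoc. rewrite anc_rel by auto.
           simpl. apply phi_nth; auto.
      * right; left. exists (s ++ [e]). split; [auto|split; [auto|split]].
        -- intro y; split.
          ++ intro Hy. apply Mem_cons in Hy. destruct Hy as [Hy|Hy]; [subst; split; [auto|apply prefix_refl]|].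
           apply Hs3 in Hy. destruct Hy as [Hy1 Hy]. split; auto. destruct Hy as [q Hq]. exists (q ++ [e]).
           rewrite Hq, app_assoc; auto.
          ++ intros [Hy1 Hy2]. apply Mem_cons. apply prefix_snoc in Hy2. destruct Hy2 as [Hy2|Hy2].
             ** right. apply Hs3; auto.
             ** left; auto.
        -- rewrite bopt_app by discriminate. unfold ext. rewrite bopt_app by discriminate.
           unfold bopt, L; simpl. unfold lab; simpl.
           destruct (excluded_middle_informative (two_le W v)).
           ++ simpl. right; auto.
           ++ apply not_two_le_ladd; auto.
    +
      unfold ext in Hs4. rewrite Hbs in Hs4.
      assert (Hvmin : forall u, ~ wlt W u v).
      { intros u Hu. exact (Hs4 v (proj1 Hp) u Hu). }
      destruct (@exists_last _ s Hs1) as [p [es Es]].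
      destruct es as [[z L0] phis].
      assert (HL0 : L0 = None).
      { unfold bopt in Hbs. rewrite Es, last_app_ne in Hbs by discriminate. exact Hbs. }
      subst L0.
      set (z' := if excluded_middle_informative (T s) then (z - 1)%Z else (z + 1)%Z).
      set (e := (z', @None (wo W), phi_of p T) : E).
      assert (h2 : vfrom W a (p ++ [e])) by (rewrite Es in Hs2; eapply vfrom_sib; eauto).
      assert (h1 : p ++ [e] <> []) by (destruct p; discriminate).
      assert (Hz : z' <> z) by (unfold z'; destruct (excluded_middle_informative (T s)); lia).
      assert (Hne : e <> (z, None, phis)) by (intro E1; injection E1; intros; auto).
      exists (mkV (p ++ [e]) h1 h2). split.
      * split.
        -- intro Hx. apply Mem_in in Hx. apply Hs3 in Hx. destruct Hx as [_ Hx].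
           change (raw (mkV (p ++ [e]) h1 h2)) with (p ++ [e]) in Hx. rewrite Es in Hx.
           apply prefix_snoc in Hx. destruct Hx as [Hx|Hx].
           ++ apply prefix_len in Hx. rewrite length_app in Hx. simpl in Hx. lia.
           ++ apply app_inj_tail in Hx. destruct Hx as [_ Hx]. auto.
        -- intros f Hf. rewrite <- HT by auto.
           destruct (proj1 (Hs3 _) (Mem_in W a _ _ Hf)) as [Hf1 Hf2].
           unfold tarr, XT, tarrV. simpl. change (raw (mkV (p ++ [e]) h1 h2)) with (p ++ [e]).
           rewrite Es in Hf2. apply prefix_snoc in Hf2. destruct Hf2 as [[q Hq]|Hf2].
           ++ rewrite Hq at 1. rewrite <- app_assoc. rewrite anc_rel by auto.
              simpl. apply phi_nth; auto.
           ++ rewrite Hf2. rewrite arr_app. rewrite arr_cons_diff by auto.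
              rewrite <- Es. unfold ltE, e, z'.
              destruct (excluded_middle_informative (T s)) as [HTs|HTs].
              ** split; auto. intro. left. lia.
              ** split; [|tauto]. intros [H|[[H _]|[H _]]]; lia.
      * right; right. auto.
  - exfalso. eapply H; apply Hp.
Qed.

Theorem tree_lower : forall w F, Lo w F -> rkge X W w F.
Proof. exact (lower_bound X W Lo Lo_down Lo_step). Qed.

End Low.


Lemma to_nat_inj : forall p q, Cantor.to_nat p = Cantor.to_nat q -> p = q.
Proof.
  intros p q H. rewrite <- (Cantor.cancel_of_to p), <- (Cantor.cancel_of_to q), H. reflexivity.
Qed.

Fixpoint encL (l : list nat) : nat :=
  match l with [] => 0 | x :: l' => S (Cantor.to_nat (x, encL l')) end.

Lemma encL_inj : forall l1 l2, encL l1 = encL l2 -> l1 = l2.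
Proof.
  induction l1 as [|x l1 IH]; intros [|y l2] H; cbn [encL] in H; try discriminate; auto.
  apply eq_add_S in H. rename H into H'. apply to_nat_inj in H'. injection H'; intros H1 H2. subst.
  f_equal. apply IH; auto.
Qed.

Lemma map_inj_gen : forall (A B : Type) (g : A -> B), (forall x y, g x = g y -> x = y) ->
  forall l1 l2, map g l1 = map g l2 -> l1 = l2.
Proof.
  intros A B g Hg. induction l1 as [|x l1 IH]; intros [|y l2] H; simpl in H; try discriminate; auto.
  injection H; intros H1 H2. f_equal; auto.
Qed.

Definition encZ (z : Z) : nat := Cantor.to_nat (Z.to_nat z, Z.to_nat (- z)).
Lemma encZ_inj : forall z1 z2, encZ z1 = encZ z2 -> z1 = z2.
Proof.
  intros z1 z2 H. unfold encZ in H. apply to_nat_inj in H. injection H; intros H1 H2.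
  apply (f_equal Z.of_nat) in H1. apply (f_equal Z.of_nat) in H2.
  rewrite !ZifyInst.of_nat_to_nat_eq in *. lia.
Qed.

Section Count.
Variable W : wellorder.
Variable f : wo W -> nat.
Hypothesis Hf : forall x y, f x = f y -> x = y.

Definition encO (o : option (wo W)) : nat := match o with None => 0 | Some v => S (f v) end.
Definition encB (l : list bool) : nat := encL (map (fun b : bool => if b then 1 else 0) l).
Definition encE (e : E W) : nat :=
  match e with (z, o, l) => Cantor.to_nat (encZ z, Cantor.to_nat (encO o, encB l)) end.

Lemma encE_inj : forall e1 e2, encE e1 = encE e2 -> e1 = e2.
Proof.
  intros [[z1 o1] l1] [[z2 o2] l2] H. cbn [encE] in H.
  apply to_nat_inj in H. apply pair_equal_spec in H. destruct H as [H2 H1].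
  apply to_nat_inj in H1. apply pair_equal_spec in H1. destruct H1 as [H4 H3].
  apply encZ_inj in H2. subst z2.
  assert (o1 = o2).
  { destruct o1, o2; simpl in H4; try discriminate; auto. injection H4; intro; f_equal; auto. }
  assert (l1 = l2).
  { apply encL_inj in H3. apply map_inj_gen in H3; auto. intros [|] [|]; simpl; congruence. }
  subst; auto.
Qed.

Lemma tree_countable : forall a, countable_tournament (XT W a).
Proof.
  intro a. exists (fun x => encL (map encE (raw W a x))).
  intros x y H. apply raw_inj. apply encL_inj in H. apply map_inj_gen in H; auto.
  apply encE_inj.
Qed.
End Count.

Section Small.
Variable W : wellorder.
Variable a : wo W.

Definition arr0 (x y : Empty_set) : Prop := False.
Lemma arr0_asym : forall u v, arr0 u v -> ~ arr0 v u. Proof. intros []. Qed.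
Lemma arr0_total : forall u v : Empty_set, u <> v -> arr0 u v \/ arr0 v u. Proof. intros []. Qed.
Definition X0 : tournament := Tournament Empty_set arr0 arr0_asym arr0_total.

Lemma X0_rank : (forall u, ~ wlt W u a) -> rank_is X0 W a.
Proof.
  intro Hmin. split.
  - apply (lower_bound X0 W (fun w _ => wle W w a)).
    + intros w v F Hv H. left. eapply wle_trans_lt; eauto.
    + intros w v F Hp H. exfalso. apply (Hmin v). eapply wle_trans_lt; [apply Hp|auto].
    + right; auto.
  - intros b Hab Hr. apply (upper_bound X0 W (fun w _ => wle W w a)) in Hr.
    + destruct Hr as [Hr|Hr]; [exact (wlt_asym W _ _ Hab Hr)|subst; exact (wlt_irrefl W _ Hab)].
    + auto.
    + intros. apply wle_min; auto.
    + intros w F H1 H2 H. change (ladd W (Some a) 0 w). apply ladd_lim; auto.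
    + intro F. exists (fun _ => True). intros w v [].
Qed.

Definition arr1 (x y : unit) : Prop := False.
Lemma arr1_asym : forall u v, arr1 u v -> ~ arr1 v u. Proof. intros u v []. Qed.
Lemma arr1_total : forall u v : unit, u <> v -> arr1 u v \/ arr1 v u.
Proof. intros [] [] H. exfalso; apply H; auto. Qed.
Definition X1 : tournament := Tournament unit arr1 arr1_asym arr1_total.

Lemma X1_rank : (exists u, wlt W u a) -> ~ two_le W a -> rank_is X1 W a.
Proof.
  intros Hne H2.
  assert (Hbelow : forall v, wlt W v a -> forall u, ~ wlt W u v).
  { intros v Hv u Hu. apply H2. exists u, v. auto. }
  split.
  - apply (lower_bound X1 W (fun w F => ((forall y, ~ In y F) /\ wle W w a) \/ (forall u, ~ wlt W u w))).
    + intros w v F Hv [[H1 H3]|H]; [left; split; auto; left; eapply wle_trans_lt; eauto|].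
      exfalso; eapply H; eauto.
    + intros w v F Hp [[H1 H3]|H] t.
      * exists tt. split.
        -- split; [apply H1|]. intros y Hy; exfalso; eapply H1; eauto.
        -- right. apply Hbelow. eapply wle_trans_lt; [apply Hp|auto].
      * exfalso. eapply H; apply Hp.
    + left. split; [intros y []|right; auto].
  - intros b Hab Hr.
    apply (upper_bound X1 W (fun w F => ((forall y, ~ In y F) -> wle W w a) /\
                                        ((exists y, In y F) -> ladd W None 1 w))) in Hr.
    + destruct Hr as [Hr _]. specialize (Hr (fun y H => H)).
      destruct Hr as [Hr|Hr]; [exact (wlt_asym W _ _ Hab Hr)|subst; exact (wlt_irrefl W _ Hab)].
    + intros w F G HFG [U1 U2]. split.
      * intro Hn. apply U1. intros y Hy. apply (Hn y), HFG; auto.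
      * intros [y Hy]. apply U2. exists y. apply HFG; auto.
    + intros w F H. split; [intros _; apply wle_min; auto|intros _; apply ladd_min_S; auto].
    + intros w F H1 H3 H. split.
      * intro Hn. change (ladd W (Some a) 0 w). apply ladd_lim; auto.
        intros v Hv. apply (proj1 (H v Hv)); auto.
      * intro Hy. apply ladd_lim; auto. intros v Hv. apply (proj2 (H v Hv)); auto.
    + intro F. exists (fun _ => True). intros w v x Hp [Hx _] [_ U2].
      destruct (classic (exists y, In y F)) as [[y Hy]|Hn].
      * exfalso. destruct x, y. auto.
      * split.
        -- intros _. assert (Hv : ladd W None 1 v) by (apply U2; exists x; left; auto).
           destruct (wlt_total W w a) as [E1|[E1|E1]]; [left; auto|right; auto|].
           exfalso. destruct (proj2 Hp a E1) as [E2|E2].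
           ++ subst. destruct Hne as [u Hu]. exact (Hv u Hu).
           ++ exact (Hv a E2).
        -- intro Hy; exfalso; auto.
Qed.
End Small.

Theorem corollary5p14 :
  forall (W : wellorder) (a : wo W),
    countable_wellorder W ->
    (exists b, wlt W a b) ->
    exists X : tournament, countable_tournament X /\ rank_is X W a.
Proof.
  intros W a [f Hf] _.
  destruct (classic (exists u, wlt W u a)) as [Hne|Hmin].
  - destruct (classic (two_le W a)) as [H2|H2].
    + exists (XT W a). split; [apply (tree_countable W f Hf)|].
      split.
      * apply tree_lower. left. split; [intros y []|right; auto].
      * intros b Hab Hr. apply (tree_upper W a H2) in Hr. destruct Hr as [U1 _].
        specialize (U1 (fun y H => H)).
        destruct U1 as [U1|U1]; [exact (wlt_asym W _ _ Hab U1)|subst; exact (wlt_irrefl W _ Hab)].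
    + exists X1. split; [exists (fun _ => 0); intros [] [] _; auto|].
      apply X1_rank; auto.
  - exists X0. split; [exists (fun x : Empty_set => match x with end); intros []|].
    apply X0_rank. intros u Hu; apply Hmin; eauto.
Qed.
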